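(* Let $\mathcal{X}$ be a set of feasible solutions and $f_1,\dots,f_m:\mathcal{X}\to\mathbb{R}$. Fix $K\ge1$, a preference vector $\boldsymbol{\lambda}$ with $\lambda_i\ge0$, $\sum_i\lambda_i=1$, and $\boldsymbol{z}^*\in\mathbb{R}^m$. For $X_K=\{\boldsymbol{x}^{(1)},\dots,\boldsymbol{x}^{(K)}\}\subseteq\mathcal{X}$ let $$g^{(\mathrm{TCH\text{-}Set})}(X_K\mid\boldsymbol{\lambda})=\max_{1\le i\le m}\Big\{\lambda_i\Big(\min_{1\le k\le K}f_i(\boldsymbol{x}^{(k)})-z_i^*\Big)\Big\},$$ and for $\mu>0$, $\mu_1,\dots,\mu_m>0$ let $$g^{(\mathrm{STCH\text{-}Set})}_{\mu,\{\mu_i\}}(X_K\mid\boldsymbol{\lambda})=\mu\log\left(\sum_{i=1}^m\exp\left(\frac{\lambda_i\left(-\mu_i\log\left(\sum_{k=1}^K e^{-f_i(\boldsymbol{x}^{(k)})/\mu_i}\right)-z_i^*\right)}{\mu}\right)\right).$$ Then $g^{(\mathrm{STCH\text{-}Set})}_{\mu,\{\mu_i\}}(\cdot\mid\boldsymbol{\lambda})$ is a uniform smooth approximation of $g^{(\mathrm{TCH\text{-}Set})}(\cdot\mid\boldsymbol{\lambda})$: for every set $X_K$ of $K$ solutions in $\mathcal{X}$, $$\lim_{\mu\downarrow0,\ \mu_i\downarrow0\ \forall i}g^{(\mathrm{STCH\text{-}Set})}_{\mu,\{\mu_i\}}(X_K\mid\boldsymbol{\lambda})=g^{(\mathrm{TCH\text{-}Set})}(X_K\mid\boldsymbol{\lambda}),$$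 with the convergence uniform over all such sets $X_K$. *)

(* Defs.v *)
From HB Require Import structures.
From mathcomp Require Import all_boot all_order all_algebra.
From mathcomp Require Import all_classical all_reals all_analysis.
Set Implicit Arguments. Unset Strict Implicit. Unset Printing Implicit Defensive.
Import Order.TTheory GRing.Theory Num.Theory.
Local Open Scope ring_scope.

(* Minimum / maximum of a finite sequence of reals; the seed is the head
   of the sequence, so for a nonempty sequence these are the true min/max. *)
Definition seqmin {R : realType} (s : seq R) : R :=
  \big[Num.min/head 0 s]_(y <- s) y.
Definition seqmax {R : realType} (s : seq R) : R :=
  \big[Num.max/head 0 s]_(y <- s) y.

Definition g_tch_set {R : realType} {X : Type} (m K : nat)
  (f : 'I_m -> X -> R) (lam z : 'I_m -> R) (x : 'I_K -> X) : R :=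
  seqmax [seq lam i * (seqmin [seq f i (x k) | k <- enum 'I_K] - z i)
         | i <- enum 'I_m].

Definition g_stch_set {R : realType} {X : Type} (m K : nat)
  (f : 'I_m -> X -> R) (lam z : 'I_m -> R) (mu : R) (mus : 'I_m -> R)
  (x : 'I_K -> X) : R :=
  mu * ln (\sum_(i < m)
     expR (lam i * (- mus i * ln (\sum_(k < K) expR (- f i (x k) / mus i)) - z i)
           / mu)).

(* Main.v *)
Require Import Defs.
From HB Require Import structures.
From mathcomp Require Import all_boot all_order all_algebra.
From mathcomp Require Import all_classical all_reals all_analysis.
Import Order.TTheory GRing.Theory Num.Theory.
Local Open Scope ring_scope.
From mathcomp Require Import ring lra.



Lemma bigmax_ub (R : realType) (x : R) (s : seq R) y :
  y \in s -> y <= \big[Num.max/x]_(v <- s) v.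
Proof.
elim: s => [//|a t IH]; rewrite in_cons big_cons => /orP [/eqP ->|Hy].
  by rewrite le_max lexx.
by rewrite le_max (IH Hy) orbT.
Qed.

Lemma bigmin_lb (R : realType) (x : R) (s : seq R) y :
  y \in s -> \big[Num.min/x]_(v <- s) v <= y.
Proof.
elim: s => [//|a t IH]; rewrite in_cons big_cons => /orP [/eqP ->|Hy].
  by rewrite ge_min lexx.
by rewrite ge_min (IH Hy) orbT.
Qed.

Lemma seqmaxP (R : realType) (s : seq R) : s != [::] ->
  seqmax s \in s /\ forall y, y \in s -> y <= seqmax s.
Proof.
case: s => [//|x s _]; rewrite /seqmax /=; split; last first.
  by move=> y Hy; apply: bigmax_ub.
rewrite big_seq; apply: (big_ind (fun v => v \in x :: s)).
- by rewrite mem_head.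
- by move=> a b Ha Hb; case: leP.
- by [].
Qed.

Lemma seqminP (R : realType) (s : seq R) : s != [::] ->
  seqmin s \in s /\ forall y, y \in s -> seqmin s <= y.
Proof.
case: s => [//|x s _]; rewrite /seqmin /=; split; last first.
  by move=> y Hy; apply: bigmin_lb.
rewrite big_seq; apply: (big_ind (fun v => v \in x :: s)).
- by rewrite mem_head.
- by move=> a b Ha Hb; case: leP.
- by [].
Qed.

Lemma lse_lb (R : realType) (n : nat) (mu : R) (b : 'I_n -> R) j :
  0 < mu -> b j <= mu * ln (\sum_(i < n) expR (b i / mu)).
Proof.
move=> mu0.
have H1 : expR (b j / mu) <= \sum_(i < n) expR (b i / mu).
  rewrite (bigD1 j) //= lerDl; apply: sumr_ge0 => i _; exact: expR_ge0.
have H2 : b j / mu <= ln (\sum_(i < n) expR (b i / mu)).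
  rewrite -[X in X <= _]expRK ler_ln // ?posrE ?expR_gt0 //.
  exact: lt_le_trans (expR_gt0 _) H1.
by rewrite mulrC -ler_pdivrMr.
Qed.

Lemma lse_ub (R : realType) (n : nat) (mu : R) (b : 'I_n -> R) M :
  (0 < n)%N -> 0 < mu -> (forall i, b i <= M) ->
  mu * ln (\sum_(i < n) expR (b i / mu)) <= M + mu * ln n%:R.
Proof.
move=> n0 mu0 HM.
have H1 : \sum_(i < n) expR (b i / mu) <= n%:R * expR (M / mu).
  rewrite mulr_natl -[in X in _ <= X](card_ord n) -sumr_const.
  apply: ler_sum => i _; rewrite ler_expR ler_pM2r ?invr_gt0 //.
have Spos : 0 < \sum_(i < n) expR (b i / mu).
  rewrite (bigD1 (Ordinal n0)) //=; apply: (lt_le_trans (expR_gt0 (b (Ordinal n0) / mu))).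
  rewrite lerDl; apply: sumr_ge0 => i _; exact: expR_ge0.
have npos : (0 : R) < n%:R by rewrite ltr0n.
have H2 : ln (\sum_(i < n) expR (b i / mu)) <= ln (n%:R) + M / mu.
  rewrite -[X in _ <= _ + X]expRK -lnM ?posrE ?expR_gt0 //.
  by rewrite ler_ln // posrE mulr_gt0 // expR_gt0.
apply: (le_trans (ler_wpM2l (ltW mu0) H2)).
by rewrite mulrDr addrC mulrCA mulfV ?gt_eqF // mulr1.
Qed.

Lemma arith (R : realType) (G T B C dm dk mm d eps : R) :
  B <= G -> G <= T + mm -> T = C -> C - dk <= B -> mm <= dm ->
  dk + dm + d = eps -> 0 <= dm -> 0 <= dk -> 0 < d -> (- eps < G - T < eps).
Proof. move=> *; apply/andP; split; lra. Qed.

Theorem theorem3 (R : realType) (X : Type) (m K : nat)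
  (f : 'I_m -> X -> R) (lam z : 'I_m -> R)
  (hm : (0 < m)%N) (hK : (0 < K)%N)
  (hlam0 : forall i, 0 <= lam i) (hlam1 : \sum_(i < m) lam i = 1) :
  forall eps : R, 0 < eps ->
  exists delta : R, 0 < delta /\
    forall (mu : R) (mus : 'I_m -> R),
      0 < mu -> mu < delta ->
      (forall i, 0 < mus i /\ mus i < delta) ->
      forall x : 'I_K -> X, injective x ->
        `| g_stch_set f lam z mu mus x - g_tch_set f lam z x | < eps.
Proof.
move=> eps eps0.
have lK : 0 <= ln (K%:R : R) by apply: ln_ge0; rewrite ler1n.
have lm : 0 <= ln (m%:R : R) by apply: ln_ge0; rewrite ler1n.
set L := ln (K%:R : R) + ln (m%:R : R) + 1.
have L0 : 0 < L by rewrite /L; lra.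
exists (eps / L); split; first by rewrite divr_gt0.
set delta := eps / L.
have d0 : 0 < delta by rewrite divr_gt0.
have dL : delta * ln (K%:R : R) + delta * ln (m%:R : R) + delta = eps.
  by rewrite -[X in _ + X]mulr1 -!mulrDr -/L /delta divfK ?gt_eqF.
move=> mu mus mu0 mud Hmus x _.
have lam1 : forall i, lam i <= 1.
  move=> i; rewrite -hlam1 (bigD1 i) //= lerDl; exact: sumr_ge0.
pose a i := seqmin [seq f i (x k) | k <- enum 'I_K].
have Ha : forall i, (exists k, a i = f i (x k)) /\ forall k, a i <= f i (x k).
  move=> i.
  have ne : [seq f i (x k) | k <- enum 'I_K] != [::].
    by rewrite -size_eq0 size_map size_enum_ord -lt0n.
  have [H1 H2] := @seqminP R _ ne; split.
    by case/mapP: H1 => k _ Hk; exists k.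
  by move=> k; apply: H2; apply: map_f; rewrite mem_enum.
pose inner i := - mus i * ln (\sum_(k < K) expR (- f i (x k) / mus i)).
have Hin : forall i, a i - mus i * ln K%:R <= inner i /\ inner i <= a i.
  move=> i; have [[k0 Hk0] Hle] := Ha i; have [mi0 _] := Hmus i.
  have H1 := @lse_lb _ _ _ (fun k => - f i (x k)) k0 mi0.
  have H2 := @lse_ub _ _ _ (fun k => - f i (x k)) (- a i) hK mi0.
  have H3 : forall k, - f i (x k) <= - a i by move=> k; rewrite lerN2.
  have {}H2 := H2 H3.
  rewrite /inner mulNr; simpl in H1, H2; split; lra.
pose c i := lam i * (a i - z i).
pose b i := lam i * (inner i - z i).
have bc : forall i, b i <= c i.
  move=> i; rewrite /b /c ler_wpM2l //; have := Hin i; lra.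
have cb : forall i, c i - delta * ln K%:R <= b i.
  move=> i; have [Hi1 Hi2] := Hin i; have [mi0 mid] := Hmus i.
  have E1 : lam i * (a i - inner i) <= lam i * (mus i * ln K%:R).
    by rewrite ler_wpM2l //; lra.
  have E2 : lam i * (mus i * ln K%:R) <= mus i * ln K%:R.
    by rewrite ler_piMl // mulr_ge0 // ltW.
  have E3 : mus i * ln K%:R <= delta * ln K%:R.
    by rewrite ler_wpM2r // ltW.
  have E4 : c i - b i = lam i * (a i - inner i) by rewrite /c /b; ring.
  lra.
have ne : [seq c i | i <- enum 'I_m] != [::].
  by rewrite -size_eq0 size_map size_enum_ord -lt0n.
have [HC1 HC2] := @seqmaxP R _ ne.
case/mapP: HC1 => j0 _ Hj0.
have HC3 : forall i, c i <= g_tch_set f lam z x.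
  by move=> i; apply: HC2; apply: map_f; rewrite mem_enum.
have GL : b j0 <= g_stch_set f lam z mu mus x by exact: (@lse_lb _ _ _ b j0 mu0).
have GU : g_stch_set f lam z mu mus x <= g_tch_set f lam z x + mu * ln m%:R.
  apply: (@lse_ub _ _ _ b _ hm mu0) => i; exact: le_trans (bc i) (HC3 i).
have Gt : g_tch_set f lam z x = c j0 by [].
have E5 : mu * ln m%:R <= delta * ln m%:R by rewrite ler_wpM2r // ltW.
have := cb j0.
have P1 : 0 <= delta * ln (m%:R : R) by rewrite mulr_ge0 // ltW.
have P2 : 0 <= delta * ln (K%:R : R) by rewrite mulr_ge0 // ltW.
move=> Hcb; rewrite ltr_norml; exact: (@arith R _ _ _ _ _ _ _ _ _ GL GU Gt Hcb E5 dL P1 P2 d0).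
Qed.
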